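(* There is an absolute constant $c>0$ such that every ordered tree $T$ with maximum degree $d\ge 1$ has a 3D arc diagram drawing with base plane $\mathcal{P}_1=\{z=0\}$ whose perpendicular projection onto $\mathcal{P}_1$ is a straight-line drawing of $T$ (each arc projecting onto the segment joining its endpoints) and whose angular resolution is at least $c/\sqrt{d}$.
   Context: An ordered tree is a tree together with a prescribed cyclic ordering of the edges around each vertex. A 3D arc diagram drawing of $T$ with base plane $\mathcal{P}_1=\{z=0\}$ is a placement of the vertices at distinct points of $\mathcal{P}_1$, together with, for each edge $e=(a,b)$, a circular arc (a contiguous subset of a circle; a straight segment is allowed as the degenerate case) with endpoints at the positions of $a$ and $b$, such that: the arc lies in the plane $\mathcal{P}_2$ containing the segment $ab$ and perpendicular to $\mathcal{P}_1$; all arcs lie in the closed half-space $z\ge 0$; and the arc forms the same angle $\alpha_e\in[0,\pi/2]$ with the segment $ab$ at both of its endpoints. The angle between two arcs incident to a common vertex $v$ is the angle in $[0,\pi]$ between their tangent rays at $v$ (directed into the arcs). The angular resolution of the drawing is the minimum of this angle over all vertices $v$ and all pairs of distinct edges incident to $v$. *)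

(* Defs.v *)
From Stdlib Require Import Reals Lra Lia List Relations.
Import ListNotations.
Open Scope R_scope.

Definition adj (E : list (nat * nat)) (a b : nat) : Prop :=
  In (a, b) E \/ In (b, a) E.

Definition is_tree (n : nat) (E : list (nat * nat)) : Prop :=
  (1 <= n)%nat /\
  (forall a b, In (a, b) E -> (a < n)%nat /\ (b < n)%nat /\ a <> b) /\
  length E = (n - 1)%nat /\
  (forall v, (v < n)%nat -> clos_refl_trans nat (adj E) 0%nat v).

Definition degree (E : list (nat * nat)) (v : nat) : nat :=
  length (filter (fun e => orb (Nat.eqb (fst e) v) (Nat.eqb (snd e) v)) E).

Definition max_degree (n : nat) (E : list (nat * nat)) (d : nat) : Prop :=
  (exists v, (v < n)%nat /\ degree E v = d) /\
  (forall v, (v < n)%nat -> (degree E v <= d)%nat).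

(** Ordered tree: a rotation system, i.e. for every vertex v a list
    [rot v] enumerating the neighbours of v without repetition; the
    list is read cyclically (its starting point is irrelevant). *)
Definition is_rotation_system (n : nat) (E : list (nat * nat))
    (rot : nat -> list nat) : Prop :=
  forall v, (v < n)%nat ->
    NoDup (rot v) /\ (forall w, In w (rot v) <-> adj E v w).

Definition is_ordered_tree (n : nat) (E : list (nat * nat))
    (rot : nat -> list nat) : Prop :=
  is_tree n E /\ is_rotation_system n E rot.

(** * Plane geometry (the base plane P1 = {z = 0} is identified with R^2) *)

Definition pt := (R * R)%type.

Definition on_segment (a b x : pt) : Prop :=
  exists s, 0 <= s <= 1 /\
    x = ((1 - s) * fst a + s * fst b, (1 - s) * snd a + s * snd b).

(** Planar straight-line drawing of the ordered tree with vertex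
    positions p: distinct vertex positions; two distinct edges (as
    segments) meet only in a common endpoint; and the counterclockwise
    order of the edges around every vertex is the prescribed cyclic
    order [rot v]. *)
Definition straight_line_drawing (n : nat) (E : list (nat * nat))
    (rot : nat -> list nat) (p : nat -> pt) : Prop :=
  (forall u v, (u < n)%nat -> (v < n)%nat -> u <> v -> p u <> p v) /\
  (forall a b c d x, In (a, b) E -> In (c, d) E -> (a, b) <> (c, d) ->
     on_segment (p a) (p b) x -> on_segment (p c) (p d) x ->
     exists u, (u = a \/ u = b) /\ (u = c \/ u = d) /\ x = p u) /\
  (forall v, (v < n)%nat ->
     exists theta : nat -> R,
       (forall i, (S i < length (rot v))%nat -> theta i < theta (S i)) /\
       ((0 < length (rot v))%nat ->
          theta (length (rot v) - 1)%nat < theta 0%nat + 2 * PI) /\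
       (forall i, (i < length (rot v))%nat ->
          exists r, 0 < r /\
            fst (p (nth i (rot v) 0%nat)) - fst (p v) = r * cos (theta i) /\
            snd (p (nth i (rot v) 0%nat)) - snd (p v) = r * sin (theta i))).

(** * 3D arc diagrams
    The arc of the edge {v,w} lies in the vertical plane through the
    segment p v -- p w, in the half-space z >= 0, and makes the same angle
    alpha v w in [0, pi/2] with the segment at both endpoints.  Such an arc
    is uniquely determined by alpha (alpha = 0: the segment itself;
    alpha in (0, pi/2]: the upper circular arc of at most a half circle);
    in particular it projects perpendicularly onto the segment [p v, p w].
    A 3D arc diagram drawing is thus given by the vertex positions p in
    the base plane and the angle function alpha (symmetric on edges). *)
Definition arc_diagram (n : nat) (E : list (nat * nat))
    (p : nat -> pt) (alpha : nat -> nat -> R) : Prop :=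
  (forall u v, (u < n)%nat -> (v < n)%nat -> u <> v -> p u <> p v) /\
  (forall v w, adj E v w -> 0 <= alpha v w <= PI / 2 /\ alpha v w = alpha w v).

Definition pt3 := (R * R * R)%type.

Definition arc_tangent (p : nat -> pt) (alpha : nat -> nat -> R)
    (v w : nat) : pt3 :=
  let dx := fst (p w) - fst (p v) in
  let dy := snd (p w) - snd (p v) in
  let L := sqrt (dx * dx + dy * dy) in
  let a := alpha v w in
  (cos a * (dx / L), cos a * (dy / L), sin a).

Definition dot3 (x y : pt3) : R :=
  let '(x1, x2, x3) := x in let '(y1, y2, y3) := y in
  x1 * y1 + x2 * y2 + x3 * y3.

Definition arc_angle (p : nat -> pt) (alpha : nat -> nat -> R)
    (v w1 w2 : nat) : R :=
  acos (dot3 (arc_tangent p alpha v w1) (arc_tangent p alpha v w2)).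

Definition angular_resolution_ge (n : nat) (E : list (nat * nat))
    (p : nat -> pt) (alpha : nat -> nat -> R) (r : R) : Prop :=
  forall v w1 w2, (v < n)%nat -> adj E v w1 -> adj E v w2 -> w1 <> w2 ->
    r <= arc_angle p alpha v w1 w2.

(* Main.v *)
Require Import Defs.
From Stdlib Require Import Reals List.
From Stdlib Require Import Lra Lia Psatz Arith Relations ClassicalEpsilon Classical.
Import ListNotations.
Open Scope R_scope.

Module Aux.

Lemma acos_ge : forall x g, 0 <= g <= PI -> x <= cos g -> g <= acos x.
Proof.
  intros x g Hg Hx.
  destruct (Rle_dec x (-1)) as [H1|H1].
  { unfold acos. destruct (Rle_dec x (-1)); [lra|contradiction]. }
  destruct (Rle_dec 1 x) as [H2|H2].
  { pose proof (COS_bound g). assert (cos g = 1) by lra.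
    destruct (Req_dec g 0) as [->|Hn].
    - pose proof (acos_bound x); lra.
    - assert (Hc : cos g < cos 0) by (apply cos_decreasing_1; lra).
      rewrite cos_0 in Hc; lra. }
  destruct (Rle_dec g (acos x)) as [|Hlt]; auto.
  exfalso. pose proof (acos_bound x).
  assert (Hc : cos g < cos (acos x)) by (apply cos_decreasing_1; lra).
  rewrite cos_acos in Hc; lra.
Qed.

Lemma cos_abs : forall z, cos (Rabs z) = cos z.
Proof. intros z. unfold Rabs; destruct (Rcase_abs z); auto. apply cos_neg. Qed.

Lemma cos_le_mono : forall x y, 0 <= x -> x <= y -> y <= PI -> cos y <= cos x.
Proof.
  intros x y H1 H2 H3. destruct (Req_dec x y) as [->|Hn]; [lra|].
  left. apply cos_decreasing_1; lra.
Qed.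

Lemma dot_diff : forall a1 a2 t1 t2 dl,
  0 <= a1 <= PI/4 -> 0 <= a2 <= PI/4 -> 0 <= dl -> dl <= Rabs (a1 - a2) ->
  dl <= acos (cos a1 * cos t1 * (cos a2 * cos t2) + cos a1 * sin t1 * (cos a2 * sin t2) + sin a1 * sin a2).
Proof.
  intros a1 a2 t1 t2 dl Ha1 Ha2 Hd Hdl.
  pose proof PI_RGT_0.
  assert (Hab : Rabs (a1 - a2) <= PI/4) by (unfold Rabs; destruct (Rcase_abs (a1 - a2)); lra).
  apply acos_ge; [lra|].
  assert (E : cos a1 * cos t1 * (cos a2 * cos t2) + cos a1 * sin t1 * (cos a2 * sin t2) + sin a1 * sin a2
     = cos a1 * cos a2 * cos (t1 - t2) + sin a1 * sin a2) by (rewrite cos_minus; ring).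
  rewrite E.
  assert (0 <= cos a1) by (apply cos_ge_0; lra).
  assert (0 <= cos a2) by (apply cos_ge_0; lra).
  pose proof (COS_bound (t1 - t2)).
  assert (Hp : 0 <= cos a1 * cos a2) by (apply Rmult_le_pos; lra).
  assert (cos a1 * cos a2 * cos (t1 - t2) <= cos a1 * cos a2).
  { rewrite <- (Rmult_1_r (cos a1 * cos a2)) at 2. apply Rmult_le_compat_l; lra. }
  assert (Hcd : cos (a1 - a2) <= cos dl).
  { rewrite <- cos_abs. apply cos_le_mono; lra. }
  rewrite cos_minus in Hcd. lra.
Qed.

Lemma dot_same : forall a t1 t2 ph,
  0 <= a <= PI/4 -> 0 <= ph -> ph <= Rabs (t1 - t2) -> Rabs (t1 - t2) <= PI ->
  ph / 2 <= acos (cos a * cos t1 * (cos a * cos t2) + cos a * sin t1 * (cos a * sin t2) + sin a * sin a).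
Proof.
  intros a t1 t2 ph Ha Hp Hp1 Hp2.
  pose proof PI_RGT_0.
  apply acos_ge; [lra|].
  assert (E : cos a * cos t1 * (cos a * cos t2) + cos a * sin t1 * (cos a * sin t2) + sin a * sin a
     = cos a * cos a * cos (t1 - t2) + sin a * sin a) by (rewrite cos_minus; ring).
  rewrite E.
  assert (Hc : cos (t1 - t2) <= cos ph) by (rewrite <- cos_abs; apply cos_le_mono; lra).
  assert (Hs : sin a * sin a = 1 - cos a * cos a).
  { pose proof (sin2_cos2 a). unfold Rsqr in H0. lra. }
  assert (H2a : 0 <= cos (2 * a)) by (apply cos_ge_0; lra).
  rewrite cos_2a_cos in H2a.
  assert (Hph : cos ph = 2 * cos (ph/2) * cos (ph/2) - 1).
  { rewrite <- cos_2a_cos. f_equal. field. }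
  assert (0 <= cos (ph/2)) by (apply cos_ge_0; lra).
  pose proof (COS_bound (ph/2)).
  pose proof (COS_bound ph).
  rewrite Hs.
  assert (cos a * cos a * cos (t1 - t2) <= cos a * cos a * cos ph) by nra.
  nra.
Qed.

Local Open Scope nat_scope.

Fixpoint index_of (l : list nat) (x : nat) : nat :=
  match l with
  | [] => 0
  | y :: l' => if Nat.eqb y x then 0 else S (index_of l' x)
  end.

Lemma index_of_spec : forall l x, In x l ->
  (index_of l x < length l)%nat /\ nth (index_of l x) l 0%nat = x.
Proof.
  induction l as [|y l IH]; intros x Hx; simpl in *; [contradiction|].
  destruct (Nat.eqb_spec y x) as [E|E].
  - split; [lia|auto].
  - destruct Hx as [Hx|Hx]; [congruence|]. destruct (IH x Hx). split; [lia|auto].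
Qed.

Lemma index_of_nth : forall l i, NoDup l -> (i < length l)%nat ->
  index_of l (nth i l 0%nat) = i.
Proof.
  induction l as [|y l IH]; intros i Hnd Hi; simpl in *; [lia|].
  inversion Hnd; subst.
  destruct i as [|i].
  - rewrite Nat.eqb_refl; auto.
  - destruct (Nat.eqb_spec y (nth i l 0%nat)) as [E|E].
    + exfalso. apply H1. rewrite E. apply nth_In. lia.
    + f_equal. apply IH; auto. lia.
Qed.

Lemma nth_inj : forall (l : list nat) i j, NoDup l -> (i < length l)%nat -> (j < length l)%nat ->
  nth i l 0%nat = nth j l 0%nat -> i = j.
Proof.
  intros l i j H Hi Hj E. rewrite <- (index_of_nth l i), <- (index_of_nth l j) by auto. now rewrite E.
Qed.

Lemma mod_eq_far : forall K S i1 i2, (0 < K)%nat -> i1 <> i2 ->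
  (S + i1) mod K = (S + i2) mod K -> (K <= i1 - i2 \/ K <= i2 - i1)%nat.
Proof.
  intros K S i1 i2 HK Hn E.
  pose proof (Nat.div_mod (S + i1) K ltac:(lia)).
  pose proof (Nat.div_mod (S + i2) K ltac:(lia)).
  set (q1 := (S + i1) / K) in *. set (q2 := (S + i2) / K) in *.
  rewrite E in H.
  assert (q1 <> q2) by (intro; subst q1; rewrite H1 in H; lia).
  assert (q1 < q2 \/ q2 < q1)%nat as [L|L] by lia.
  - right. assert (K * q1 + K <= K * q2)%nat by nia. lia.
  - left. assert (K * q2 + K <= K * q1)%nat by nia. lia.
Qed.

Local Open Scope R_scope.

Lemma div_nonneg : forall a b, 0 <= a -> 0 < b -> 0 <= a / b.
Proof. intros a b Ha Hb. apply Rmult_le_pos; [auto|left; apply Rinv_0_lt_compat; auto]. Qed.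

Section Geo.
Variables (n : nat) (E : list (nat * nat)) (rot : nat -> list nat) (d : nat) (par depth : nat -> nat).
Hypothesis Hrot : forall v, (v < n)%nat -> NoDup (rot v) /\ (forall w, In w (rot v) <-> adj E v w).
Hypothesis Hadjn : forall a b, adj E a b -> (a < n)%nat /\ (b < n)%nat.
Hypothesis Hdeg : forall v, (v < n)%nat -> (length (rot v) <= d)%nat.
Hypothesis Hd1 : (1 <= d)%nat.
Hypothesis Hpar0 : par 0%nat = 0%nat.
Hypothesis Hdep0 : depth 0%nat = 0%nat.
Hypothesis Hpar : forall v, (v < n)%nat -> v <> 0%nat ->
  (par v < n)%nat /\ adj E v (par v) /\ depth v = S (depth (par v)).
Hypothesis Hadj : forall a b, adj E a b -> (b <> 0 /\ par b = a)%nat \/ (a <> 0 /\ par a = b)%nat.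

Definition Kl := Nat.sqrt_up d.
Definition s0 := sin (PI / (2 * INR d)).
Definition eps := s0 / 4.
Definition mdeg v := length (rot v).
Definition i0 v := index_of (rot v) (par v).
Definition beta_of v th := if Nat.eqb v 0 then 0 else th + PI - PI * INR (i0 v) / INR (mdeg v).
Definition shift_of v L := if Nat.eqb v 0 then 0%nat else (L + Kl * mdeg v - i0 v)%nat.
Fixpoint info (f v : nat) : R * nat * pt :=
  match f with
  | O => (0, 0%nat, (0,0))
  | S f' => let u := par v in
      match info f' u with (thu, Lu, pu) =>
        let th := beta_of u thu + PI * INR (index_of (rot u) v) / INR (mdeg u) in
        (th, ((shift_of u Lu + index_of (rot u) v) mod Kl)%nat,
         (fst pu + eps ^ depth v * cos th, snd pu + eps ^ depth v * sin th))
      end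
  end.
Definition theta v := fst (fst (info (depth v) v)).
Definition lev v := snd (fst (info (depth v) v)).
Definition pos v := snd (info (depth v) v).
Definition beta v := beta_of v (theta v).
Definition shv v := shift_of v (lev v).
Definition dir v i := beta v + PI * INR i / INR (mdeg v).

Lemma info_step : forall v, (v < n)%nat -> v <> 0%nat ->
  theta v = dir (par v) (index_of (rot (par v)) v) /\
  lev v = ((shv (par v) + index_of (rot (par v)) v) mod Kl)%nat /\
  pos v = (fst (pos (par v)) + eps ^ depth v * cos (theta v),
           snd (pos (par v)) + eps ^ depth v * sin (theta v)).
Proof.
  intros v Hv Hv0. destruct (Hpar v Hv Hv0) as [_ [_ Hd]].
  unfold dir, beta, shv. unfold theta, lev, pos.
  replace (info (depth v) v) with (info (S (depth (par v))) v) by (rewrite Hd; reflexivity).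
  simpl. destruct (info (depth (par v)) (par v)) as [[thu Lu] pu]. simpl.
  repeat split; reflexivity.
Qed.

Lemma Kl_pos : (0 < Kl)%nat.
Proof.
  unfold Kl. pose proof (Nat.sqrt_up_spec d ltac:(lia)). destruct (Nat.sqrt_up d); simpl in *; lia.
Qed.

Lemma s0_pos : 0 < s0 <= 1.
Proof.
  unfold s0. pose proof PI_RGT_0. assert (1 <= INR d) by (apply (le_INR 1); lia).
  split; [|apply SIN_bound]. apply sin_gt_0.
  - apply Rdiv_lt_0_compat; lra.
  - assert (H2 : PI / (2 * INR d) <= PI / 2).
    { unfold Rdiv. apply Rmult_le_compat_l; [lra|]. apply Rinv_le_contravar; lra. }
    lra.
Qed.

Lemma eps_pos : 0 < eps <= 1/4.
Proof. pose proof s0_pos. unfold eps. lra. Qed.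

Lemma lev_lt : forall v, (v < n)%nat -> v <> 0%nat -> (lev v < Kl)%nat.
Proof.
  intros v Hv Hv0. destruct (info_step v Hv Hv0) as [_ [-> _]]. apply Nat.mod_upper_bound.
  pose proof Kl_pos. lia.
Qed.

Lemma adj_sym : forall a b, adj E a b -> adj E b a.
Proof. unfold adj; intros; tauto. Qed.

Lemma adj_par_not : forall v, (v < n)%nat -> v <> 0%nat -> par (par v) <> v.
Proof.
  intros v Hv Hv0 E1. destruct (Hpar v Hv Hv0) as [Hpn [_ Hd]].
  destruct (Nat.eq_dec (par v) 0) as [Z|Z].
  - rewrite Z, Hpar0 in E1. auto.
  - destruct (Hpar _ Hpn Z) as [_ [_ Hd2]]. rewrite E1 in Hd2. lia.
Qed.

Lemma shv_i0 : forall v, (v < n)%nat -> v <> 0%nat ->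
  ((shv v + i0 v) mod Kl)%nat = lev v.
Proof.
  intros v Hv Hv0. unfold shv, shift_of. destruct (Nat.eqb_spec v 0); [contradiction|].
  destruct (Hpar v Hv Hv0) as [_ [Ha _]]. destruct (Hrot v Hv) as [_ Hr].
  apply Hr in Ha. destruct (index_of_spec _ _ Ha) as [Hl _]. fold (i0 v) in Hl. unfold mdeg.
  pose proof Kl_pos.
  replace (lev v + Kl * length (rot v) - i0 v + i0 v)%nat with (lev v + length (rot v) * Kl)%nat by nia.
  rewrite Nat.Div0.mod_add. apply Nat.mod_small. apply lev_lt; auto.
Qed.

Lemma NL : forall v i, (v < n)%nat -> (i < mdeg v)%nat ->
  let w := nth i (rot v) 0%nat in
  (w < n)%nat /\ exists L, 0 < L /\
    pos w = (fst (pos v) + L * cos (dir v i), snd (pos v) + L * sin (dir v i)) /\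
    ((w <> 0%nat /\ par w = v /\ L = eps ^ depth w /\ lev w = ((shv v + i) mod Kl)%nat) \/
     (v <> 0%nat /\ w = par v /\ L = eps ^ depth v /\ lev v = ((shv v + i) mod Kl)%nat)).
Proof.
  intros v i Hv Hi w.
  destruct (Hrot v Hv) as [Hnd Hr].
  assert (Hin : In w (rot v)) by (apply nth_In; auto).
  assert (Ha : adj E v w) by (apply Hr; auto).
  destruct (Hadjn _ _ Ha) as [_ Hwn]. split; auto.
  pose proof eps_pos.
  destruct (Hadj _ _ Ha) as [[Hw0 Hpw]|[Hv0 Hpv]].
  - exists (eps ^ depth w). split; [apply pow_lt; lra|].
    destruct (info_step w Hwn Hw0) as [Ht [Hl Hp]].
    rewrite Hpw in Ht, Hl, Hp.
    assert (Hiw : index_of (rot v) w = i) by (unfold w; apply index_of_nth; auto).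
    rewrite Hiw in Ht, Hl.
    split.
    + rewrite Hp. rewrite Ht. reflexivity.
    + left. repeat split; auto.
  - exists (eps ^ depth v). split; [apply pow_lt; lra|].
    destruct (info_step v Hv Hv0) as [Ht [Hl Hp]].
    assert (Hi0 : i = i0 v).
    { unfold i0. rewrite Hpv. unfold w. rewrite index_of_nth; auto. }
    assert (Hdir : dir v i = theta v + PI).
    { unfold dir, beta, beta_of. destruct (Nat.eqb_spec v 0); [contradiction|].
      rewrite Hi0. assert (0 < INR (mdeg v)) by (apply lt_0_INR; lia). field. lra. }
    split.
    + rewrite Hdir, neg_cos, neg_sin. rewrite <- Hpv. rewrite Hp. simpl. idtac.
      destruct (pos (par v)) as [x y]. simpl. f_equal; ring.
    + right. repeat split; auto. rewrite Hi0. symmetry. apply shv_i0; auto.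
Qed.


Definition desc c a := exists t, (t <= depth a)%nat /\ Nat.iter t par a = c.
Definition below v c a := (c < n)%nat /\ c <> 0%nat /\ par c = v /\ desc c a.

Lemma iter_props : forall t a, (a < n)%nat -> (t <= depth a)%nat ->
  (Nat.iter t par a < n)%nat /\ depth (Nat.iter t par a) = (depth a - t)%nat.
Proof.
  induction t as [|t IH]; intros a Ha Ht; simpl.
  - split; auto; lia.
  - destruct (IH a Ha ltac:(lia)) as [H1 H2].
    assert (Hz : Nat.iter t par a <> 0%nat) by (intro Z; rewrite Z, Hdep0 in H2; lia).
    destruct (Hpar _ H1 Hz) as [H3 [_ H4]]. split; auto. lia.
Qed.

Lemma desc_refl : forall a, desc a a.
Proof. intros a. exists 0%nat. split; [lia|reflexivity]. Qed.

Lemma desc_par : forall c a, (a < n)%nat -> a <> 0%nat -> desc c (par a) -> desc c a.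
Proof.
  intros c a Ha Ha0 [t [Ht Hi]]. destruct (Hpar a Ha Ha0) as [_ [_ Hd]].
  exists (S t). split; [lia|]. rewrite Nat.iter_succ_r. auto.
Qed.

Lemma desc_lt : forall c a, (a < n)%nat -> desc c a -> (c < n)%nat /\ (depth c <= depth a)%nat.
Proof.
  intros c a Ha [t [Ht Hi]]. destruct (iter_props t a Ha Ht) as [H1 H2]. subst. split; auto; lia.
Qed.

Lemma desc_eqdepth : forall c a, (a < n)%nat -> desc c a -> depth c = depth a -> c = a.
Proof.
  intros c a Ha [t [Ht Hi]] Hd. destruct (iter_props t a Ha Ht) as [H1 H2]. subst.
  assert (t = 0%nat) by lia. subst. reflexivity.
Qed.

Lemma desc_strict : forall c a, (a < n)%nat -> desc c a -> a <> c -> a <> 0%nat /\ desc c (par a).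
Proof.
  intros c a Ha [t [Ht Hi]] Hne. destruct t as [|t]; [simpl in Hi; congruence|].
  assert (Ha0 : a <> 0%nat) by (intro Z; subst; rewrite Hdep0 in Ht; lia).
  split; auto. destruct (Hpar a Ha Ha0) as [_ [_ Hd]].
  exists t. split; [lia|]. rewrite <- Nat.iter_succ_r. auto.
Qed.

Lemma desc_below : forall v b, (b < n)%nat -> desc v b -> b <> v -> exists c, below v c b.
Proof.
  intros v b Hb [t [Ht Hi]] Hne. destruct t as [|t]; [simpl in Hi; congruence|].
  exists (Nat.iter t par b).
  destruct (iter_props t b Hb ltac:(lia)) as [H1 H2].
  assert (Hz : Nat.iter t par b <> 0%nat) by (intro Z; rewrite Z, Hdep0 in H2; lia).
  split; [auto|split; [auto|split]].
  - simpl in Hi. auto.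
  - exists t. split; [lia|reflexivity].
Qed.

Lemma tri : forall N a b, (depth a + depth b <= N)%nat -> (a < n)%nat -> (b < n)%nat -> a <> b ->
  (exists c, below b c a) \/ (exists c, below a c b) \/
  (exists v c1 c2, c1 <> c2 /\ below v c1 a /\ below v c2 b).
Proof.
  induction N as [|N IH]; intros a b HN Ha Hb Hab.
  - exfalso. assert (depth a = 0%nat) by lia. assert (depth b = 0%nat) by lia.
    assert (a = 0%nat) by (destruct (Nat.eq_dec a 0); auto; destruct (Hpar a Ha n0) as [_ [_ X]]; lia).
    assert (b = 0%nat) by (destruct (Nat.eq_dec b 0); auto; destruct (Hpar b Hb n0) as [_ [_ X]]; lia).
    congruence.
  -
    assert (key : forall a b, (depth a + depth b <= S N)%nat -> (a < n)%nat -> (b < n)%nat -> a <> b ->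
      (depth b <= depth a)%nat ->
      (exists c, below b c a) \/ (exists c, below a c b) \/
      (exists v c1 c2, c1 <> c2 /\ below v c1 a /\ below v c2 b)).
    { clear a b HN Ha Hb Hab. intros a b HN Ha Hb Hab Hle.
      assert (Ha0 : a <> 0%nat).
      { intro Z. subst. rewrite Hdep0 in Hle.
        assert (b = 0%nat) by (destruct (Nat.eq_dec b 0); auto; destruct (Hpar b Hb n0) as [_ [_ X]]; lia).
        congruence. }
      destruct (Hpar a Ha Ha0) as [Hpa [_ Hda]].
      destruct (Nat.eq_dec (par a) b) as [Eb|Eb].
      { left. exists a. split; auto. split; auto. split; auto. apply desc_refl. }
      destruct (IH (par a) b ltac:(lia) Hpa Hb Eb) as [[c Hc]|[[c Hc]|[v [c1 [c2 [H1 [H2 H3]]]]]]].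
      - left. exists c. destruct Hc as [? [? [? Hc]]]. repeat split; auto. apply desc_par; auto.
      - destruct Hc as [Hcn [Hc0 [Hpc Hdc]]].
        destruct (desc_lt _ _ Hb Hdc) as [_ Hdl].
        destruct (Hpar c Hcn Hc0) as [_ [_ Hdcc]].
        rewrite Hpc in Hdcc. assert (c = b) by (apply desc_eqdepth; auto; lia). subst c.
        right. right. exists (par a), a, b. split; auto.
        split; repeat split; auto; apply desc_refl.
      - right. right. exists v, c1, c2. split; auto. split; auto.
        destruct H2 as [? [? [? Hc]]]. repeat split; auto. apply desc_par; auto. }
    destruct (le_lt_dec (depth b) (depth a)).
    + apply key; auto.
    + destruct (key b a ltac:(lia) Hb Ha (not_eq_sym Hab) ltac:(lia)) as [X|[X|[v [c1 [c2 [H1 [H2 H3]]]]]]].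
      * right; left; auto.
      * left; auto.
      * right; right. exists v, c2, c1. auto.
Qed.

Definition rho k := 2 * eps ^ (S k) / (1 - eps).
Definition N1 (y z : pt) := Rabs (fst y - fst z) + Rabs (snd y - snd z).

Lemma abs_cos_sin : forall t, Rabs (cos t) + Rabs (sin t) <= 2.
Proof.
  intros t. pose proof (COS_bound t). pose proof (SIN_bound t).
  unfold Rabs; destruct (Rcase_abs (cos t)); destruct (Rcase_abs (sin t)); lra.
Qed.

Lemma disk_gen : forall t a c, (a < n)%nat -> (t <= depth a)%nat -> Nat.iter t par a = c ->
  N1 (pos a) (pos c) <= rho (depth c) - rho (depth a).
Proof.
  induction t as [|t IH]; intros a c Ha Ht Hi.
  - simpl in Hi. subst. unfold N1. rewrite !Rminus_diag, Rabs_R0. lra.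
  - assert (Ha0 : a <> 0%nat) by (intro Z; subst; rewrite Hdep0 in Ht; lia).
    destruct (Hpar a Ha Ha0) as [Hpa [_ Hda]].
    rewrite Nat.iter_succ_r in Hi.
    pose proof (IH (par a) c Hpa ltac:(lia) Hi) as IHa.
    destruct (info_step a Ha Ha0) as [_ [_ Hp]].
    pose proof eps_pos.
    assert (Hr : rho (depth (par a)) - rho (depth a) = 2 * eps ^ depth a).
    { unfold rho. rewrite Hda. simpl. field. lra. }
    assert (He : 0 < eps ^ depth a) by (apply pow_lt; lra).
    unfold N1 in *. rewrite Hp. simpl.
    pose proof (abs_cos_sin (theta a)).
    assert (Rabs (fst (pos (par a)) + eps ^ depth a * cos (theta a) - fst (pos c)) <=
            Rabs (fst (pos (par a)) - fst (pos c)) + eps ^ depth a * Rabs (cos (theta a))).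
    { replace (fst (pos (par a)) + eps ^ depth a * cos (theta a) - fst (pos c)) with
        ((fst (pos (par a)) - fst (pos c)) + eps ^ depth a * cos (theta a)) by ring.
      eapply Rle_trans; [apply Rabs_triang|]. rewrite Rabs_mult, (Rabs_right (eps ^ depth a)); lra. }
    assert (Rabs (snd (pos (par a)) + eps ^ depth a * sin (theta a) - snd (pos c)) <=
            Rabs (snd (pos (par a)) - snd (pos c)) + eps ^ depth a * Rabs (sin (theta a))).
    { replace (snd (pos (par a)) + eps ^ depth a * sin (theta a) - snd (pos c)) with
        ((snd (pos (par a)) - snd (pos c)) + eps ^ depth a * sin (theta a)) by ring.
      eapply Rle_trans; [apply Rabs_triang|]. rewrite Rabs_mult, (Rabs_right (eps ^ depth a)); lra. }
    nra.
Qed.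

Lemma rho_pos : forall k, 0 <= rho k.
Proof.
  intros k. pose proof eps_pos. unfold rho. apply Rmult_le_pos.
  - apply Rmult_le_pos; [lra|]. left; apply pow_lt; lra.
  - left. apply Rinv_0_lt_compat. lra.
Qed.

Lemma disk : forall c a, (a < n)%nat -> desc c a -> N1 (pos a) (pos c) <= rho (depth c).
Proof.
  intros c a Ha [t [Ht Hi]]. pose proof (disk_gen t a c Ha Ht Hi). pose proof (rho_pos (depth a)). lra.
Qed.

Lemma rho_small : forall k, rho k < eps ^ k * s0.
Proof.
  intros k. pose proof eps_pos. pose proof s0_pos. unfold rho. simpl.
  assert (0 < eps ^ k) by (apply pow_lt; lra).
  assert (Hq: 2 * (eps * eps ^ k) / (1 - eps) = eps^k * (2*eps/(1-eps))) by (field; lra).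
  rewrite Hq. apply Rmult_lt_compat_l; auto.
  apply (Rmult_lt_reg_r (1-eps)); [lra|].
  replace (2*eps/(1-eps)*(1-eps)) with (2*eps) by (field; lra). unfold eps in *; nra.
Qed.


Definition sg v i j := sin (PI * (INR i - INR j) / (2 * INR (mdeg v))).
Definition bis v i j := (dir v i + dir v j) / 2.
Definition Hf v i j (y : pt) :=
  sg v i j * (cos (bis v i j) * (snd y - snd (pos v)) - sin (bis v i j) * (fst y - fst (pos v))).

Lemma Hf_ray : forall v i j y r, (0 < mdeg v)%nat ->
  fst y - fst (pos v) = r * cos (dir v i) -> snd y - snd (pos v) = r * sin (dir v i) ->
  Hf v i j y = r * (sg v i j * sg v i j).
Proof.
  intros v i j y r Hm H1 H2. unfold Hf. rewrite H1, H2.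
  replace (cos (bis v i j) * (r * sin (dir v i)) - sin (bis v i j) * (r * cos (dir v i)))
    with (r * sin (dir v i - bis v i j)) by (rewrite sin_minus; ring).
  replace (dir v i - bis v i j) with (PI * (INR i - INR j) / (2 * INR (mdeg v))).
  - unfold sg. ring.
  - assert (0 < INR (mdeg v)) by (apply lt_0_INR; lia). unfold bis, dir. field. lra.
Qed.

Lemma Hf_anti : forall v i j y, Hf v j i y = - Hf v i j y.
Proof.
  intros v i j y. unfold Hf.
  assert (Hb : bis v j i = bis v i j) by (unfold bis; f_equal; ring).
  assert (Hs : sg v j i = - sg v i j).
  { unfold sg. rewrite <- sin_neg. f_equal. unfold Rdiv. ring. }
  rewrite Hb, Hs. ring.
Qed.

Lemma Hf_lip : forall v i j y z, Hf v i j z - Rabs (sg v i j) * N1 y z <= Hf v i j y.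
Proof.
  intros v i j y z.
  assert (E1 : Hf v i j z - Hf v i j y =
    sg v i j * (cos (bis v i j) * (snd z - snd y) - sin (bis v i j) * (fst z - fst y)))
    by (unfold Hf; ring).
  assert (B : Rabs (cos (bis v i j) * (snd z - snd y) - sin (bis v i j) * (fst z - fst y)) <= N1 y z).
  { unfold N1. unfold Rminus at 1. eapply Rle_trans; [apply Rabs_triang|].
    rewrite Rabs_Ropp, !Rabs_mult.
    pose proof (COS_bound (bis v i j)). pose proof (SIN_bound (bis v i j)).
    assert (Rabs (cos (bis v i j)) <= 1) by (apply Rabs_le; lra).
    assert (Rabs (sin (bis v i j)) <= 1) by (apply Rabs_le; lra).
    rewrite (Rabs_minus_sym (snd z)), (Rabs_minus_sym (fst z)).
    pose proof (Rabs_pos (fst y - fst z)). pose proof (Rabs_pos (snd y - snd z)).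
    pose proof (Rabs_pos (cos (bis v i j))). pose proof (Rabs_pos (sin (bis v i j))).
    nra. }
  assert (Rabs (Hf v i j z - Hf v i j y) <= Rabs (sg v i j) * N1 y z).
  { rewrite E1, Rabs_mult. apply Rmult_le_compat_l; [apply Rabs_pos|auto]. }
  pose proof (Rle_abs (Hf v i j z - Hf v i j y)). lra.
Qed.

Lemma sin_ge_s0 : forall x, PI / (2 * INR d) <= x <= PI / 2 -> s0 <= sin x.
Proof.
  intros x Hx. unfold s0. pose proof PI_RGT_0.
  assert (1 <= INR d) by (apply (le_INR 1); lia).
  assert (0 < PI / (2 * INR d)) by (apply Rdiv_lt_0_compat; lra).
  destruct (Req_dec (PI / (2 * INR d)) x) as [<-|Hn]; [lra|].
  left. apply sin_increasing_1; lra.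
Qed.

Lemma frac_bounds : forall k m, (1 <= k)%nat -> (k < m)%nat -> (m <= d)%nat ->
  PI / (2 * INR d) <= PI * INR k / (2 * INR m) <= PI / 2.
Proof.
  intros k m H1 H2 H3. pose proof PI_RGT_0.
  assert (1 <= INR k) by (apply (le_INR 1); lia).
  assert (INR k < INR m) by (apply lt_INR; lia).
  assert (INR m <= INR d) by (apply le_INR; lia).
  split.
  - assert (Eq : PI * INR k / (2 * INR m) - PI / (2 * INR d) = PI * (INR k * INR d - INR m) / (2 * INR m * INR d))
      by (field; lra).
    assert (0 <= PI * (INR k * INR d - INR m) / (2 * INR m * INR d)).
    { apply Rmult_le_pos. apply Rmult_le_pos; nra. left. apply Rinv_0_lt_compat. nra. }
    lra.
  - assert (Eq : PI / 2 - PI * INR k / (2 * INR m) = PI * (INR m - INR k) / (2 * INR m)) by (field; lra).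
    assert (0 <= PI * (INR m - INR k) / (2 * INR m)).
    { apply Rmult_le_pos. apply Rmult_le_pos; nra. left. apply Rinv_0_lt_compat. nra. }
    lra.
Qed.

Lemma sg_bound : forall v i j, (v < n)%nat -> (i < mdeg v)%nat -> (j < mdeg v)%nat -> i <> j ->
  s0 <= Rabs (sg v i j).
Proof.
  intros v i j Hv Hi Hj Hij. pose proof (Hdeg v Hv) as Hm. fold (mdeg v) in Hm.
  unfold sg. destruct (le_lt_dec i j) as [L|L].
  - assert (Eq : INR i - INR j = - INR (j - i)) by (rewrite minus_INR by lia; ring).
    rewrite Eq. replace (PI * - INR (j - i) / (2 * INR (mdeg v))) with (- (PI * INR (j - i) / (2 * INR (mdeg v))))
      by (unfold Rdiv; ring).
    rewrite sin_neg, Rabs_Ropp.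
    pose proof (frac_bounds (j - i) (mdeg v) ltac:(lia) ltac:(lia) Hm).
    pose proof (sin_ge_s0 _ H). pose proof s0_pos. rewrite Rabs_right; lra.
  - assert (Eq : INR i - INR j = INR (i - j)) by (rewrite minus_INR by lia; ring).
    rewrite Eq.
    pose proof (frac_bounds (i - j) (mdeg v) ltac:(lia) ltac:(lia) Hm).
    pose proof (sin_ge_s0 _ H). pose proof s0_pos. rewrite Rabs_right; lra.
Qed.

Lemma N1_seg : forall P Q y z r, on_segment P Q y -> N1 P z <= r -> N1 Q z <= r -> N1 y z <= r.
Proof.
  intros P Q y z r [s [Hs ->]] H1 H2. unfold N1 in *. simpl.
  replace ((1 - s) * fst P + s * fst Q - fst z) with ((1 - s) * (fst P - fst z) + s * (fst Q - fst z)) by ring.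
  replace ((1 - s) * snd P + s * snd Q - snd z) with ((1 - s) * (snd P - snd z) + s * (snd Q - snd z)) by ring.
  pose proof (Rabs_triang ((1 - s) * (fst P - fst z)) (s * (fst Q - fst z))).
  pose proof (Rabs_triang ((1 - s) * (snd P - snd z)) (s * (snd Q - snd z))).
  rewrite !Rabs_mult in *. rewrite (Rabs_right s), (Rabs_right (1 - s)) in * by lra.
  nra.
Qed.

Lemma SL_child : forall v i j a y, (v < n)%nat -> (i < mdeg v)%nat -> (j < mdeg v)%nat -> i <> j ->
  nth i (rot v) 0%nat <> 0%nat -> par (nth i (rot v) 0%nat) = v ->
  (a < n)%nat -> a <> 0%nat -> desc (nth i (rot v) 0%nat) a ->
  on_segment (pos (par a)) (pos a) y ->
  0 <= Hf v i j y /\ (Hf v i j y = 0 -> y = pos v /\ par a = v).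
Proof.
  intros v i j a y Hv Hi Hj Hij Hw0 Hpw Ha Ha0 Hda Hseg.
  pose proof (NL v i Hv Hi) as [Hwn [L [HL [Hpos Hcase]]]].
  set (w := nth i (rot v) 0%nat) in *.
  assert (HLw : L = eps ^ depth w).
  { destruct Hcase as [[_ [_ [X _]]]|[Hv0 [Hwp _]]]; auto.
    exfalso. apply (adj_par_not v Hv Hv0). rewrite <- Hwp. auto. }
  pose proof (sg_bound v i j Hv Hi Hj Hij) as Hsg. pose proof s0_pos.
  assert (Hsg2 : 0 < sg v i j * sg v i j).
  { assert (sg v i j <> 0) by (intro Z; rewrite Z, Rabs_R0 in Hsg; lra).
    destruct (Rlt_or_le 0 (sg v i j)); [nra|]. assert (sg v i j < 0) by lra. nra. }
  assert (Hm : (0 < mdeg v)%nat) by lia.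
  destruct (Nat.eq_dec a w) as [Eaw|Naw].
  - rewrite Eaw in Hseg |- *. rewrite Hpw in Hseg.
    destruct Hseg as [s [Hs Hy]].
    assert (Hr : Hf v i j y = s * L * (sg v i j * sg v i j)).
    { rewrite Hpos in Hy. apply Hf_ray; auto; rewrite Hy; simpl; ring. }
    rewrite Hr. split; [apply Rmult_le_pos; [nra|lra]|].
    intro Z. assert (s = 0).
    { destruct (Req_dec s 0); auto. assert (0 < s * L) by nra. nra. }
    subst s. split; auto. rewrite Hy. destruct (pos v), (pos w). simpl. f_equal; ring.
  - destruct (desc_strict w a Ha Hda Naw) as [_ Hdpa].
    destruct (Hpar a Ha Ha0) as [Hpan _].
    pose proof (disk w a Ha Hda). pose proof (disk w (par a) Hpan Hdpa).
    pose proof (N1_seg _ _ _ _ _ Hseg H1 H0) as Hy.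
    pose proof (Hf_lip v i j y (pos w)) as Hl.
    assert (Hw : Hf v i j (pos w) = L * (sg v i j * sg v i j)) by (apply Hf_ray; auto; rewrite Hpos; simpl; ring).
    pose proof (rho_small (depth w)). rewrite <- HLw in H2.
    assert (Hpos2 : 0 < Hf v i j y).
    { assert (sg v i j * sg v i j = Rabs (sg v i j) * Rabs (sg v i j)).
      { rewrite <- Rabs_mult. rewrite Rabs_right; auto. lra. }
      rewrite Hw, H3 in Hl.
      pose proof (Rabs_pos (sg v i j)).
      assert (Rabs (sg v i j) * N1 y (pos w) <= Rabs (sg v i j) * rho (depth w)) by (apply Rmult_le_compat_l; auto).
      assert (L * s0 <= L * Rabs (sg v i j)) by (apply Rmult_le_compat_l; lra).
      nra. }
    split; [lra|]. intro; lra.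
Qed.

Lemma SL_parent : forall v i j y, (v < n)%nat -> v <> 0%nat -> (i < mdeg v)%nat -> (j < mdeg v)%nat -> i <> j ->
  nth i (rot v) 0%nat = par v ->
  on_segment (pos (par v)) (pos v) y ->
  0 <= Hf v i j y /\ (Hf v i j y = 0 -> y = pos v).
Proof.
  intros v i j y Hv Hv0 Hi Hj Hij Hw Hseg.
  pose proof (NL v i Hv Hi) as [Hwn [L [HL [Hpos _]]]].
  rewrite Hw in Hpos.
  pose proof (sg_bound v i j Hv Hi Hj Hij) as Hsg. pose proof s0_pos.
  assert (Hsg2 : 0 < sg v i j * sg v i j).
  { assert (sg v i j <> 0) by (intro Z; rewrite Z, Rabs_R0 in Hsg; lra).
    destruct (Rlt_or_le 0 (sg v i j)); [nra|]. assert (sg v i j < 0) by lra. nra. }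
  assert (Hm : (0 < mdeg v)%nat) by lia.
  destruct Hseg as [s [Hs Hy]].
  assert (Hr : Hf v i j y = (1 - s) * L * (sg v i j * sg v i j)).
  { rewrite Hpos in Hy. apply Hf_ray; auto; rewrite Hy; simpl; ring. }
  rewrite Hr. split; [apply Rmult_le_pos; [nra|lra]|].
  intro Z. assert (s = 1).
  { destruct (Req_dec s 1); auto. assert (0 < (1 - s) * L) by nra. nra. }
  subst s. rewrite Hy. destruct (pos v), (pos (par v)). simpl. f_equal; ring.
Qed.


Lemma in_rot_idx : forall v w, (v < n)%nat -> adj E v w ->
  (index_of (rot v) w < mdeg v)%nat /\ nth (index_of (rot v) w) (rot v) 0%nat = w.
Proof.
  intros v w Hv Ha. destruct (Hrot v Hv) as [_ Hr]. apply Hr in Ha. apply index_of_spec; auto.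
Qed.

Lemma cross1 : forall a b c y, (a < n)%nat -> (b < n)%nat -> a <> 0%nat -> b <> 0%nat ->
  below b c a ->
  on_segment (pos (par a)) (pos a) y -> on_segment (pos (par b)) (pos b) y ->
  y = pos b /\ par a = b.
Proof.
  intros a b c y Ha Hb Ha0 Hb0 [Hcn [Hc0 [Hpc Hdc]]] S1 S2.
  destruct (Hpar c Hcn Hc0) as [_ [Hac _]]. rewrite Hpc in Hac. apply adj_sym in Hac.
  destruct (Hpar b Hb Hb0) as [_ [Hab _]].
  destruct (in_rot_idx b c Hb Hac) as [Hic Hnc].
  destruct (in_rot_idx b (par b) Hb Hab) as [Hip Hnp].
  set (ic := index_of (rot b) c) in *. set (ip := index_of (rot b) (par b)) in *.
  assert (Hne : ic <> ip).
  { intro Z. rewrite Z in Hnc. rewrite Hnc in Hnp. apply (adj_par_not b Hb Hb0). rewrite <- Hnp. auto. }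
  rewrite <- Hnc in Hc0, Hpc, Hdc.
  destruct (SL_child b ic ip a y Hb Hic Hip Hne Hc0 Hpc Ha Ha0 Hdc S1) as [P1 Q1].
  destruct (SL_parent b ip ic y Hb Hb0 Hip Hic (not_eq_sym Hne) Hnp S2) as [P2 _].
  rewrite Hf_anti in P2. apply Q1. lra.
Qed.

Lemma cross : forall a b y, (a < n)%nat -> (b < n)%nat -> a <> 0%nat -> b <> 0%nat -> a <> b ->
  on_segment (pos (par a)) (pos a) y -> on_segment (pos (par b)) (pos b) y ->
  exists u, (u = par a \/ u = a) /\ (u = par b \/ u = b) /\ y = pos u.
Proof.
  intros a b y Ha Hb Ha0 Hb0 Hab S1 S2.
  destruct (tri _ a b (le_n _) Ha Hb Hab) as [[c Hc]|[[c Hc]|[v [c1 [c2 [Hne [B1 B2]]]]]]].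
  - destruct (cross1 a b c y Ha Hb Ha0 Hb0 Hc S1 S2) as [Hy Hp].
    exists b. auto.
  - destruct (cross1 b a c y Hb Ha Hb0 Ha0 Hc S2 S1) as [Hy Hp].
    exists a. auto.
  - destruct B1 as [Hc1n [Hc10 [Hpc1 Hd1']]]. destruct B2 as [Hc2n [Hc20 [Hpc2 Hd2']]].
    assert (Hvn : (v < n)%nat) by (rewrite <- Hpc1; apply Hpar; auto).
    destruct (Hpar c1 Hc1n Hc10) as [_ [A1 _]]. rewrite Hpc1 in A1. apply adj_sym in A1.
    destruct (Hpar c2 Hc2n Hc20) as [_ [A2 _]]. rewrite Hpc2 in A2. apply adj_sym in A2.
    destruct (in_rot_idx v c1 Hvn A1) as [Hi1 Hn1].
    destruct (in_rot_idx v c2 Hvn A2) as [Hi2 Hn2].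
    set (i1 := index_of (rot v) c1) in *. set (i2 := index_of (rot v) c2) in *.
    assert (Hne' : i1 <> i2) by (intro Z; apply Hne; rewrite <- Hn1, <- Hn2, Z; auto).
    rewrite <- Hn1 in Hc10, Hpc1, Hd1'. rewrite <- Hn2 in Hc20, Hpc2, Hd2'.
    destruct (SL_child v i1 i2 a y Hvn Hi1 Hi2 Hne' Hc10 Hpc1 Ha Ha0 Hd1' S1) as [P1 Q1].
    destruct (SL_child v i2 i1 b y Hvn Hi2 Hi1 (not_eq_sym Hne') Hc20 Hpc2 Hb Hb0 Hd2' S2) as [P2 Q2].
    rewrite Hf_anti in P2.
    assert (Z : Hf v i1 i2 y = 0) by lra.
    destruct (Q1 Z) as [Hy Hpa]. rewrite Hf_anti in Q2. destruct (Q2 ltac:(lra)) as [_ Hpb].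
    exists v. auto.
Qed.

Lemma on_seg_end : forall P Q, on_segment P Q Q.
Proof. intros P Q. exists 1. split; [lra|]. destruct P, Q; simpl; f_equal; ring. Qed.

Lemma below_far : forall v c a, (a < n)%nat -> below v c a -> pos a <> pos v.
Proof.
  intros v c a Ha [Hcn [Hc0 [Hpc Hdc]]] Heq.
  pose proof (disk c a Ha Hdc) as Hd. rewrite Heq in Hd.
  destruct (info_step c Hcn Hc0) as [_ [_ Hp]]. rewrite Hpc in Hp.
  pose proof (rho_small (depth c)). pose proof s0_pos. pose proof eps_pos.
  assert (He : 0 < eps ^ depth c) by (apply pow_lt; lra).
  unfold N1 in Hd. rewrite Hp in Hd. simpl in Hd.
  replace (fst (pos v) - (fst (pos v) + eps ^ depth c * cos (theta c))) with (- (eps ^ depth c * cos (theta c))) in Hd by ring.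
  replace (snd (pos v) - (snd (pos v) + eps ^ depth c * sin (theta c))) with (- (eps ^ depth c * sin (theta c))) in Hd by ring.
  rewrite !Rabs_Ropp, !Rabs_mult, Rabs_right in Hd by lra.
  assert (1 <= Rabs (cos (theta c)) + Rabs (sin (theta c))).
  { pose proof (sin2_cos2 (theta c)). unfold Rsqr in H2. pose proof (COS_bound (theta c)). pose proof (SIN_bound (theta c)).
    unfold Rabs; destruct (Rcase_abs (cos (theta c))); destruct (Rcase_abs (sin (theta c))); nra. }
  nra.
Qed.

Lemma pos_inj : forall u w, (u < n)%nat -> (w < n)%nat -> u <> w -> pos u <> pos w.
Proof.
  intros u w Hu Hw Huw Heq.
  destruct (tri _ u w (le_n _) Hu Hw Huw) as [[c Hc]|[[c Hc]|[v [c1 [c2 [Hne [B1 B2]]]]]]].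
  - apply (below_far w c u Hu Hc). auto.
  - apply (below_far u c w Hw Hc). auto.
  - assert (Hu0 : u <> 0%nat).
    { intro Z. destruct B1 as [_ [Hc0 [_ Hd]]]. subst u. destruct Hd as [t [Ht Hi]]. rewrite Hdep0 in Ht.
      assert (t = 0%nat) by lia. subst t. simpl in Hi. auto. }
    assert (Hw0 : w <> 0%nat).
    { intro Z. destruct B2 as [_ [Hc0 [_ Hd]]]. subst w. destruct Hd as [t [Ht Hi]]. rewrite Hdep0 in Ht.
      assert (t = 0%nat) by lia. subst t. simpl in Hi. auto. }
    pose proof (below_far v c1 u Hu B1) as F1. pose proof (below_far v c2 w Hw B2) as F2.
    destruct B1 as [Hc1n [Hc10 [Hpc1 Hd1']]]. destruct B2 as [Hc2n [Hc20 [Hpc2 Hd2']]].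
    assert (Hvn : (v < n)%nat) by (rewrite <- Hpc1; apply Hpar; auto).
    destruct (Hpar c1 Hc1n Hc10) as [_ [A1 _]]. rewrite Hpc1 in A1. apply adj_sym in A1.
    destruct (Hpar c2 Hc2n Hc20) as [_ [A2 _]]. rewrite Hpc2 in A2. apply adj_sym in A2.
    destruct (in_rot_idx v c1 Hvn A1) as [Hi1 Hn1].
    destruct (in_rot_idx v c2 Hvn A2) as [Hi2 Hn2].
    set (i1 := index_of (rot v) c1) in *. set (i2 := index_of (rot v) c2) in *.
    assert (Hne' : i1 <> i2) by (intro Z; apply Hne; rewrite <- Hn1, <- Hn2, Z; auto).
    rewrite <- Hn1 in Hc10, Hpc1, Hd1'. rewrite <- Hn2 in Hc20, Hpc2, Hd2'.
    destruct (SL_child v i1 i2 u (pos u) Hvn Hi1 Hi2 Hne' Hc10 Hpc1 Hu Hu0 Hd1' (on_seg_end _ _)) as [P1 Q1].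
    destruct (SL_child v i2 i1 w (pos w) Hvn Hi2 Hi1 (not_eq_sym Hne') Hc20 Hpc2 Hw Hw0 Hd2' (on_seg_end _ _)) as [P2 Q2].
    rewrite Hf_anti in P2. rewrite <- Heq in P2.
    assert (Z : Hf v i1 i2 (pos u) = 0) by lra.
    destruct (Q1 Z) as [Hy _]. auto.
Qed.


Definition Aof x := PI / (4 * INR Kl) * INR (lev x).
Definition alph v w := if Nat.eqb (par w) v then Aof w else Aof v.

Lemma alph_edge : forall v i, (v < n)%nat -> (i < mdeg v)%nat ->
  alph v (nth i (rot v) 0%nat) = PI / (4 * INR Kl) * INR ((shv v + i) mod Kl).
Proof.
  intros v i Hv Hi. pose proof (NL v i Hv Hi) as [Hwn [L [HL [Hpos Hcase]]]].
  set (w := nth i (rot v) 0%nat) in *. unfold alph, Aof.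
  destruct Hcase as [[Hw0 [Hpw [_ Hl]]]|[Hv0 [Hwp [_ Hl]]]].
  - rewrite Hpw, Nat.eqb_refl, Hl. reflexivity.
  - destruct (Nat.eqb_spec (par w) v) as [X|X].
    + exfalso. apply (adj_par_not v Hv Hv0). rewrite <- Hwp. auto.
    + rewrite Hl. reflexivity.
Qed.

Lemma tangent_eq : forall (al : nat -> nat -> R) v w L t, 0 < L ->
  pos w = (fst (pos v) + L * cos t, snd (pos v) + L * sin t) ->
  arc_tangent pos al v w = (cos (al v w) * cos t, cos (al v w) * sin t, sin (al v w)).
Proof.
  intros al v w L t HL Hp. unfold arc_tangent. rewrite Hp. simpl.
  replace (fst (pos v) + L * cos t - fst (pos v)) with (L * cos t) by ring.
  replace (snd (pos v) + L * sin t - snd (pos v)) with (L * sin t) by ring.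
  replace (L * cos t * (L * cos t) + L * sin t * (L * sin t)) with (L * L).
  2:{ pose proof (sin2_cos2 t). unfold Rsqr in H. transitivity (L * L * (sin t * sin t + cos t * cos t)); [|ring].
      rewrite H. ring. }
  rewrite sqrt_square by lra. replace (L * cos t / L) with (cos t) by (field; lra). replace (L * sin t / L) with (sin t) by (field; lra). reflexivity.
Qed.

Lemma K_bounds : 1 <= INR Kl /\ sqrt (INR d) <= INR Kl /\ INR Kl <= 2 * sqrt (INR d).
Proof.
  pose proof (Nat.sqrt_up_spec d ltac:(lia)) as [H1 H2]. fold Kl in H1, H2.
  assert (HK : (1 <= Kl)%nat) by (pose proof Kl_pos; lia).
  assert (H3 : (Kl * Kl <= 4 * d)%nat).
  { destruct Kl as [|j]; [lia|]. simpl in H1. nia. }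
  apply le_INR in H2. apply le_INR in H3. apply le_INR in HK. rewrite mult_INR in H2.
  rewrite !mult_INR in H3.
  simpl in HK. replace (INR 4) with 4 in H3 by (simpl; ring).
  assert (1 <= INR d) by (apply (le_INR 1); lia).
  pose proof (sqrt_lt_R0 (INR d) ltac:(lra)).
  pose proof (sqrt_sqrt (INR d) ltac:(lra)).
  set (k := INR Kl) in *. set (s := sqrt (INR d)) in *.
  split; [auto|split].
  - destruct (Rle_lt_dec s k) as [X|X]; auto.
    assert (k * k < s * s) by (apply Rmult_le_0_lt_compat; lra). lra.
  - destruct (Rle_lt_dec k (2 * s)) as [X|X]; auto.
    assert ((2 * s) * (2 * s) < k * k) by (apply Rmult_le_0_lt_compat; lra). assert (2*s*(2*s) = 4*(s*s)) by ring. lra.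
Qed.

Lemma angle_ok : forall v w1 w2, (v < n)%nat -> adj E v w1 -> adj E v w2 -> w1 <> w2 ->
  PI / 8 / sqrt (INR d) <= arc_angle pos alph v w1 w2.
Proof.
  intros v w1 w2 Hv A1 A2 Hne.
  destruct (in_rot_idx v w1 Hv A1) as [Hi1 Hn1].
  destruct (in_rot_idx v w2 Hv A2) as [Hi2 Hn2].
  set (i1 := index_of (rot v) w1) in *. set (i2 := index_of (rot v) w2) in *.
  assert (Hne' : i1 <> i2) by (intro Z; apply Hne; rewrite <- Hn1, <- Hn2, Z; auto).
  pose proof (NL v i1 Hv Hi1) as [_ [L1 [HL1 [Hp1 _]]]].
  pose proof (NL v i2 Hv Hi2) as [_ [L2 [HL2 [Hp2 _]]]].
  rewrite Hn1 in Hp1. rewrite Hn2 in Hp2.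
  pose proof (alph_edge v i1 Hv Hi1) as Ha1. pose proof (alph_edge v i2 Hv Hi2) as Ha2.
  rewrite Hn1 in Ha1. rewrite Hn2 in Ha2.
  unfold arc_angle. rewrite (tangent_eq alph v w1 L1 (dir v i1) HL1 Hp1).
  rewrite (tangent_eq alph v w2 L2 (dir v i2) HL2 Hp2). unfold dot3.
  rewrite Ha1, Ha2.
  pose proof K_bounds as [HK1 [HK2 HK3]].
  pose proof PI_RGT_0.
  assert (HD : 1 <= INR d) by (apply (le_INR 1); lia).
  pose proof (sqrt_lt_R0 (INR d) ltac:(lra)) as Hs.
  pose proof (sqrt_sqrt (INR d) ltac:(lra)) as Hss.
  pose proof Kl_pos as HKp.
  assert (Hlev : forall i, 0 <= PI / (4 * INR Kl) * INR ((shv v + i) mod Kl) <= PI / 4).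
  { intros i. pose proof (Nat.mod_upper_bound (shv v + i) Kl ltac:(lia)) as Hm.
    assert (Hm' : (S ((shv v + i) mod Kl) <= Kl)%nat) by lia. apply le_INR in Hm'. rewrite S_INR in Hm'.
    pose proof (pos_INR ((shv v + i) mod Kl)).
    split.
    - apply Rmult_le_pos; [|lra]. apply div_nonneg; lra.
    - replace (PI / 4) with (PI / (4 * INR Kl) * INR Kl) by (field; lra).
      apply Rmult_le_compat_l; [apply div_nonneg; lra|lra]. }
  set (l1 := ((shv v + i1) mod Kl)%nat). set (l2 := ((shv v + i2) mod Kl)%nat).
  pose proof (Hdeg v Hv) as Hm. fold (mdeg v) in Hm.
  assert (HM : 0 < INR (mdeg v)) by (apply lt_0_INR; lia).
  assert (HMd : INR (mdeg v) <= INR d) by (apply le_INR; lia).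
  destruct (Nat.eq_dec l1 l2) as [Eq|Neq].
  -
    pose proof (mod_eq_far Kl (shv v) i1 i2 HKp Hne' Eq) as Hfar.
    rewrite <- Eq.
    set (ph := PI * INR Kl / INR (mdeg v)).
    assert (Hdiff : dir v i1 - dir v i2 = PI * (INR i1 - INR i2) / INR (mdeg v)) by (unfold dir; field; lra).
    assert (Hab : INR Kl <= Rabs (INR i1 - INR i2) <= INR (mdeg v)).
    { destruct Hfar as [F|F].
      - assert (INR i1 - INR i2 = INR (i1 - i2)) by (rewrite minus_INR by lia; ring).
        rewrite H0, Rabs_right by apply Rle_ge, pos_INR. split; apply le_INR; lia.
      - assert (INR i1 - INR i2 = - INR (i2 - i1)) by (rewrite minus_INR by lia; ring).
        rewrite H0, Rabs_Ropp, Rabs_right by apply Rle_ge, pos_INR. split; apply le_INR; lia. }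
    assert (Habs : Rabs (dir v i1 - dir v i2) = PI * Rabs (INR i1 - INR i2) / INR (mdeg v)).
    { rewrite Hdiff. unfold Rdiv. rewrite !Rabs_mult, (Rabs_right PI), (Rabs_right (/ INR (mdeg v))); try lra.
      left. apply Rinv_0_lt_compat; lra. }
    assert (Hph1 : ph <= Rabs (dir v i1 - dir v i2)).
    { rewrite Habs. unfold ph. unfold Rdiv. apply Rmult_le_compat_r; [left; apply Rinv_0_lt_compat; lra|].
      apply Rmult_le_compat_l; lra. }
    assert (Hph2 : Rabs (dir v i1 - dir v i2) <= PI).
    { rewrite Habs. apply Rmult_le_reg_r with (INR (mdeg v)); [lra|].
      unfold Rdiv. rewrite Rmult_assoc, Rinv_l by lra. nra. }
    assert (Hph0 : 0 <= ph) by (unfold ph; apply div_nonneg; nra).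
    pose proof (dot_same (PI / (4 * INR Kl) * INR l1) (dir v i1) (dir v i2) ph (Hlev i1) Hph0 Hph1 Hph2) as Hds.
    eapply Rle_trans; [|apply Hds].
    unfold ph.
    assert (E1 : PI * INR Kl / INR (mdeg v) / 2 - PI / 8 / sqrt (INR d) =
      PI * (4 * INR Kl * sqrt (INR d) - INR (mdeg v)) / (8 * INR (mdeg v) * sqrt (INR d))) by (field; lra).
    assert (0 <= PI * (4 * INR Kl * sqrt (INR d) - INR (mdeg v)) / (8 * INR (mdeg v) * sqrt (INR d))).
    { apply div_nonneg; [|nra]. apply Rmult_le_pos; [lra|]. nra. }
    lra.
  -
    assert (Hdl : PI / (4 * INR Kl) <= Rabs (PI / (4 * INR Kl) * INR l1 - PI / (4 * INR Kl) * INR l2)).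
    { replace (PI / (4 * INR Kl) * INR l1 - PI / (4 * INR Kl) * INR l2) with (PI / (4 * INR Kl) * (INR l1 - INR l2)) by ring.
      rewrite Rabs_mult, (Rabs_right (PI / (4 * INR Kl))) by (apply Rle_ge, div_nonneg; lra).
      assert (1 <= Rabs (INR l1 - INR l2)).
      { destruct (le_lt_dec l1 l2).
        - assert (INR l1 - INR l2 = - INR (l2 - l1)) by (rewrite minus_INR by lia; ring).
          rewrite H0, Rabs_Ropp, Rabs_right by apply Rle_ge, pos_INR. apply (le_INR 1). lia.
        - assert (INR l1 - INR l2 = INR (l1 - l2)) by (rewrite minus_INR by lia; ring).
          rewrite H0, Rabs_right by apply Rle_ge, pos_INR. apply (le_INR 1). lia. }
      assert (0 <= PI / (4 * INR Kl)) by (apply div_nonneg; lra). nra. }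
    pose proof (dot_diff _ _ (dir v i1) (dir v i2) (PI / (4 * INR Kl)) (Hlev i1) (Hlev i2)
      ltac:(apply div_nonneg; lra) Hdl) as Hdd.
    eapply Rle_trans; [|apply Hdd].
    assert (E1 : PI / (4 * INR Kl) - PI / 8 / sqrt (INR d) =
      PI * (8 * sqrt (INR d) - 4 * INR Kl) / (32 * INR Kl * sqrt (INR d))) by (field; lra).
    assert (0 <= PI * (8 * sqrt (INR d) - 4 * INR Kl) / (32 * INR Kl * sqrt (INR d))).
    { apply div_nonneg; [|nra]. apply Rmult_le_pos; lra. }
    lra.
Qed.


Lemma on_seg_sym : forall P Q y, on_segment P Q y -> on_segment Q P y.
Proof.
  intros P Q y [s [Hs ->]]. exists (1 - s). split; [lra|]. f_equal; ring.
Qed.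

Lemma seg_child : forall a b y, In (a, b) E -> on_segment (pos a) (pos b) y ->
  exists x, (x < n)%nat /\ x <> 0%nat /\ ((par x = a /\ x = b) \/ (par x = b /\ x = a)) /\
    on_segment (pos (par x)) (pos x) y.
Proof.
  intros a b y Hin Hs. assert (Ha : adj E a b) by (left; auto).
  destruct (Hadjn a b Ha) as [Han Hbn].
  destruct (Hadj a b Ha) as [[Hb0 Hpb]|[Ha0 Hpa]].
  - exists b. repeat split; auto. rewrite Hpb. auto.
  - exists a. repeat split; auto. rewrite Hpa. apply on_seg_sym. auto.
Qed.

Lemma Aof_bound : forall x, (x < n)%nat -> x <> 0%nat -> 0 <= Aof x <= PI / 2.
Proof.
  intros x Hx Hx0. unfold Aof. pose proof (lev_lt x Hx Hx0) as Hl. pose proof PI_RGT_0.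
  pose proof Kl_pos.
  assert (Hm' : (S (lev x) <= Kl)%nat) by lia. apply le_INR in Hm'. rewrite S_INR in Hm'.
  pose proof (pos_INR (lev x)). assert (0 < INR Kl) by (apply lt_0_INR; lia).
  split.
  - apply Rmult_le_pos; [|lra]. apply div_nonneg; lra.
  - replace (PI / 2) with (PI / (4 * INR Kl) * (2 * INR Kl)) by (field; lra).
    apply Rmult_le_compat_l; [apply div_nonneg; lra|lra].
Qed.

Hypothesis Hentry : forall a b c e x, In (a, b) E -> In (c, e) E -> (a, b) <> (c, e) ->
  ((par x = a /\ x = b) \/ (par x = b /\ x = a)) ->
  ~ ((par x = c /\ x = e) \/ (par x = e /\ x = c)).

Lemma drawing :
  arc_diagram n E pos alph /\ straight_line_drawing n E rot pos /\
  angular_resolution_ge n E pos alph (PI / 8 / sqrt (INR d)).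
Proof.
  split; [split|split].
  - intros u v Hu Hv Huv. apply pos_inj; auto.
  - intros v w Ha. destruct (Hadjn v w Ha) as [Hvn Hwn].
    destruct (Hadj v w Ha) as [[Hw0 Hpw]|[Hv0 Hpv]].
    + assert (N : par v <> w).
      { intro Z. apply (adj_par_not w Hwn Hw0). rewrite Hpw. auto. }
      unfold alph. rewrite Hpw, Nat.eqb_refl. destruct (Nat.eqb_spec (par v) w); [contradiction|].
      split; auto. apply Aof_bound; auto.
    + assert (N : par w <> v).
      { intro Z. apply (adj_par_not v Hvn Hv0). rewrite Hpv. auto. }
      unfold alph. rewrite Hpv, Nat.eqb_refl. destruct (Nat.eqb_spec (par w) v); [contradiction|].
      split; auto. apply Aof_bound; auto.
  - split; [|split].
    + intros u v Hu Hv Huv. apply pos_inj; auto.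
    + intros a b c e y Hab Hce Hne S1 S2.
      destruct (seg_child a b y Hab S1) as [x1 [Hx1 [Hx10 [C1 T1]]]].
      destruct (seg_child c e y Hce S2) as [x2 [Hx2 [Hx20 [C2 T2]]]].
      assert (Hx : x1 <> x2).
      { intro Z. subst x2. apply (Hentry a b c e x1 Hab Hce Hne C1). auto. }
      destruct (cross x1 x2 y Hx1 Hx2 Hx10 Hx20 Hx T1 T2) as [u [U1 [U2 Hy]]].
      exists u. split; [|split; auto].
      * destruct C1 as [[P1 Q1]|[P1 Q1]]; destruct U1; subst; auto.
      * destruct C2 as [[P1 Q1]|[P1 Q1]]; destruct U2; subst; auto.
    + intros v Hv. exists (dir v). pose proof PI_RGT_0.
      split; [|split].
      * intros i Hi. unfold dir. rewrite S_INR.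
        assert (0 < INR (mdeg v)) by (apply lt_0_INR; unfold mdeg; lia).
        assert (PI * INR i / INR (mdeg v) < PI * (INR i + 1) / INR (mdeg v)).
        { unfold Rdiv. apply Rmult_lt_compat_r; [apply Rinv_0_lt_compat; lra|]. lra. }
        lra.
      * intros Hm. unfold dir, mdeg in *.
        assert (0 < INR (length (rot v))) by (apply lt_0_INR; lia).
        rewrite minus_INR by lia. simpl (INR 1). simpl (INR 0).
        assert (PI * (INR (length (rot v)) - 1) / INR (length (rot v)) < PI).
        { apply Rmult_lt_reg_r with (INR (length (rot v))); [lra|]. unfold Rdiv.
          rewrite Rmult_assoc, Rinv_l by lra. nra. }
        replace (PI * 0 / INR (length (rot v))) with 0 by (field; lra). lra.
      * intros i Hi. fold (mdeg v) in Hi.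
        destruct (NL v i Hv Hi) as [_ [L [HL [Hp _]]]].
        exists L. split; auto. rewrite Hp. simpl. split; ring.
  - intros v w1 w2 Hv A1 A2 Hne. apply angle_ok; auto.
Qed.

End Geo.


Lemma least_ex : forall P : nat -> Prop, (exists k, P k) -> exists k, P k /\ forall j, P j -> (k <= j)%nat.
Proof.
  intros P [k Hk]. induction k as [k IH] using (well_founded_induction lt_wf).
  destruct (classic (exists j, (j < k)%nat /\ P j)) as [[j [Hj Pj]]|Hn].
  - apply (IH j Hj Pj).
  - exists k. split; auto. intros j Pj. destruct (le_lt_dec k j); auto. exfalso. apply Hn. eauto.
Qed.

Section Comb.
Variables (n : nat) (E : list (nat * nat)) (rot : nat -> list nat) (d : nat).
Hypothesis HT : is_tree n E.
Hypothesis HR : is_rotation_system n E rot.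
Hypothesis Hmax : max_degree n E d.

Fixpoint Rk (k v : nat) : Prop :=
  match k with
  | O => v = 0%nat
  | S k' => Rk k' v \/ exists w, Rk k' w /\ adj E w v
  end.

Lemma Rk_le : forall k k' v, (k <= k')%nat -> Rk k v -> Rk k' v.
Proof.
  intros k k' v Hle. induction Hle; auto. intro H. simpl. left. auto.
Qed.

Lemma edge_bounds : forall a b, adj E a b -> (a < n)%nat /\ (b < n)%nat /\ a <> b.
Proof.
  destruct HT as [_ [He _]]. intros a b [H|H]; apply He in H; intuition.
Qed.

Lemma reach : forall v, (v < n)%nat -> exists k, Rk k v.
Proof.
  intros v Hv. destruct HT as [_ [_ [_ Hc]]]. specialize (Hc v Hv).
  apply clos_rt_rtn1 in Hc. clear Hv. induction Hc as [|y z Hyz Hc IH].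
  - exists 0%nat. reflexivity.
  - destruct IH as [k Hk]. exists (S k). right. exists y. auto.
Qed.

Definition depth v := epsilon (inhabits 0%nat) (fun k => Rk k v /\ forall j, Rk j v -> (k <= j)%nat).

Lemma depth_spec : forall v, (exists k, Rk k v) -> Rk (depth v) v /\ forall j, Rk j v -> (depth v <= j)%nat.
Proof.
  intros v Hex. unfold depth. apply epsilon_spec. apply least_ex. auto.
Qed.

Lemma depth0 : depth 0%nat = 0%nat.
Proof.
  destruct (depth_spec 0%nat (ex_intro _ 0%nat eq_refl)) as [_ H]. specialize (H 0%nat eq_refl). lia.
Qed.

Definition par v := if Nat.eqb v 0 then 0%nat
  else epsilon (inhabits 0%nat) (fun u => adj E v u /\ depth v = S (depth u)).

Lemma par0 : par 0%nat = 0%nat.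
Proof. reflexivity. Qed.

Lemma par_spec : forall v, (v < n)%nat -> v <> 0%nat ->
  (par v < n)%nat /\ adj E v (par v) /\ depth v = S (depth (par v)).
Proof.
  intros v Hv Hv0.
  assert (Hex : exists u, adj E v u /\ depth v = S (depth u)).
  { destruct (depth_spec v (reach v Hv)) as [Hr Hm].
    destruct (depth v) as [|k] eqn:Hd.
    - simpl in Hr. contradiction.
    - destruct Hr as [Hr|[w [Hw Hwv]]].
      + specialize (Hm k Hr). lia.
      + destruct (depth_spec w (ex_intro _ k Hw)) as [Hrw Hmw].
        specialize (Hmw k Hw).
        assert (Rk (S (depth w)) v) by (right; exists w; auto).
        specialize (Hm _ H). exists w. split; [unfold adj in *; tauto|lia]. }
  assert (Hp : adj E v (par v) /\ depth v = S (depth (par v))).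
  { unfold par. destruct (Nat.eqb_spec v 0); [contradiction|]. apply epsilon_spec. auto. }
  destruct Hp as [Ha Hd]. split; [|split; auto]. apply (edge_bounds _ _ Ha).
Qed.

Lemma pp_not : forall v, (v < n)%nat -> v <> 0%nat -> par (par v) <> v.
Proof.
  intros v Hv Hv0 E1. destruct (par_spec v Hv Hv0) as [Hpn [_ Hd]].
  destruct (Nat.eq_dec (par v) 0) as [Z|Z].
  - rewrite Z, par0 in E1. auto.
  - destruct (par_spec _ Hpn Z) as [_ [_ Hd2]]. rewrite E1 in Hd2. lia.
Qed.

Definition pdec : forall x y : nat * nat, {x = y} + {x <> y}.
Proof. decide equality; apply Nat.eq_dec. Defined.
Definition entry v := if in_dec pdec (par v, v) E then (par v, v) else (v, par v).

Lemma entry_in : forall v, (v < n)%nat -> v <> 0%nat -> In (entry v) E.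
Proof.
  intros v Hv Hv0. unfold entry. destruct (in_dec pdec (par v, v) E) as [H|H]; auto.
  destruct (par_spec v Hv Hv0) as [_ [[A|A] _]]; auto. contradiction.
Qed.

Lemma entry_cases : forall v, entry v = (par v, v) \/ entry v = (v, par v).
Proof. intros v. unfold entry. destruct in_dec; auto. Qed.

Lemma entry_inj : forall v1 v2, (v1 < n)%nat -> v1 <> 0%nat -> (v2 < n)%nat -> v2 <> 0%nat ->
  entry v1 = entry v2 -> v1 = v2.
Proof.
  intros v1 v2 H1 H10 H2 H20 Eq.
  destruct (entry_cases v1) as [X1|X1]; destruct (entry_cases v2) as [X2|X2];
    rewrite X1, X2 in Eq; inversion Eq; auto.
  - exfalso. apply (pp_not v1 H1 H10). congruence.
  - exfalso. apply (pp_not v1 H1 H10). congruence.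
Qed.

Definition nr := seq 1 (n - 1).

Lemma nr_spec : forall v, In v nr <-> (v < n)%nat /\ v <> 0%nat.
Proof. intros v. unfold nr. rewrite in_seq. lia. Qed.

Lemma E_entry : forall a b, In (a, b) E -> exists v, (v < n)%nat /\ v <> 0%nat /\ entry v = (a, b).
Proof.
  intros a b Hin.
  assert (Hincl : incl E (map entry nr)).
  { apply NoDup_length_incl.
    - apply NoDup_map_NoDup_ForallPairs; [|apply seq_NoDup].
      intros x y Hx Hy. apply nr_spec in Hx, Hy. apply entry_inj; tauto.
    - rewrite length_map. unfold nr. rewrite length_seq. destruct HT as [_ [_ [HL _]]]. lia.
    - intros e He. apply in_map_iff in He. destruct He as [v [<- Hv]]. apply nr_spec in Hv.
      apply entry_in; tauto. }
  apply Hincl in Hin. apply in_map_iff in Hin. destruct Hin as [v [Hv Hvn]].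
  apply nr_spec in Hvn. exists v. tauto.
Qed.

Lemma Hadj_c : forall a b, adj E a b -> (b <> 0 /\ par b = a)%nat \/ (a <> 0 /\ par a = b)%nat.
Proof.
  intros a b [H|H]; destruct (E_entry _ _ H) as [v [Hv [Hv0 Ev]]];
    destruct (entry_cases v) as [X|X]; rewrite X in Ev; inversion Ev; subst; auto.
Qed.

Lemma Hentry_c : forall a b c e x, In (a, b) E -> In (c, e) E -> (a, b) <> (c, e) ->
  ((par x = a /\ x = b) \/ (par x = b /\ x = a)) ->
  ~ ((par x = c /\ x = e) \/ (par x = e /\ x = c)).
Proof.
  intros a b c e x H1 H2 Hne C1 C2.
  destruct (E_entry _ _ H1) as [v1 [Hv1 [Hv10 E1]]].
  destruct (E_entry _ _ H2) as [v2 [Hv2 [Hv20 E2]]].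
  assert (K : forall v a b, (v < n)%nat -> v <> 0%nat -> entry v = (a, b) ->
    ((par x = a /\ x = b) \/ (par x = b /\ x = a)) -> x = v).
  { intros v a0 b0 Hv Hv0 Ev C.
    destruct (entry_cases v) as [X|X]; rewrite X in Ev; inversion Ev;
      destruct C as [[P Q]|[P Q]]; try congruence; exfalso; apply (pp_not v Hv Hv0); congruence. }
  pose proof (K v1 a b Hv1 Hv10 E1 C1). pose proof (K v2 c e Hv2 Hv20 E2 C2).
  apply Hne. rewrite <- E1, <- E2. congruence.
Qed.

Lemma Hdeg_c : forall v, (v < n)%nat -> (length (rot v) <= d)%nat.
Proof.
  intros v Hv. destruct (HR v Hv) as [Hnd Hr]. destruct Hmax as [_ Hm].
  set (f := fun w => if in_dec pdec (v, w) E then (v, w) else (w, v)).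
  assert (Hf : forall w, adj E v w -> In (f w) E /\ (fst (f w) = v \/ snd (f w) = v)).
  { intros w Ha. unfold f. destruct (in_dec pdec (v, w) E); simpl; auto.
    destruct Ha; [contradiction|]. auto. }
  eapply Nat.le_trans; [|apply (Hm v Hv)].
  unfold degree. rewrite <- (length_map f).
  apply NoDup_incl_length.
  - apply NoDup_map_NoDup_ForallPairs; auto.
    intros x y Hx Hy. apply Hr in Hx, Hy. pose proof (edge_bounds _ _ Hx). pose proof (edge_bounds _ _ Hy).
    unfold f. destruct (in_dec pdec (v, x) E); destruct (in_dec pdec (v, y) E); intro Z; inversion Z; subst; auto; lia.
  - intros e He. apply in_map_iff in He. destruct He as [w [<- Hw]]. apply Hr in Hw.
    destruct (Hf w Hw) as [Hin Hfs]. apply filter_In. split; auto.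
    destruct Hfs as [X|X]; rewrite X, Nat.eqb_refl; auto. rewrite Bool.orb_true_r; auto.
Qed.

End Comb.

End Aux.
Import Aux.

Theorem corollary3 :
  exists c : R, 0 < c /\
  forall (n : nat) (E : list (nat * nat)) (rot : nat -> list nat) (d : nat),
    is_ordered_tree n E rot ->
    max_degree n E d ->
    (1 <= d)%nat ->
    exists (p : nat -> pt) (alpha : nat -> nat -> R),
      arc_diagram n E p alpha /\
      straight_line_drawing n E rot p /\
      angular_resolution_ge n E p alpha (c / sqrt (INR d)).
Proof.
  exists (PI / 8). split; [pose proof PI_RGT_0; lra|].
  intros n E rot d [HT HR] Hmax Hd1.
  exists (pos rot d (par E) (depth E)), (alph rot d (par E) (depth E)).
  apply drawing with (n := n).
  - exact HR.
  - intros a b H. destruct (edge_bounds n E HT a b H) as [? [? _]]. auto.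
  - apply (Hdeg_c n E rot d); auto.
  - exact Hd1.
  - apply (par0 E).
  - apply (depth0 E).
  - intros v Hv Hv0. apply (par_spec n E HT); auto.
  - apply (Hadj_c n E HT).
  - apply (Hentry_c n E HT).
Qed.
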